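(* Let $a_1\in\mathbb C$, $a_2\in\mathbb R$, $\theta\in[0,2\pi)$ with $2|a_1|+|a_2|<\frac{1}{4(1+\varepsilon)^3}$, and $f(\zeta)=\big(e^{i\theta}\zeta,\ e^{2i\theta}\zeta(a_1+a_2\zeta+\overline{a_1}\zeta^2)\big)$. Then $f$ (restricted to $\overline\Delta$) is a stationary disc for the hypersurface $\partial\Omega\cap\{\rho=0\}$, i.e. $f(\partial\Delta)\subset\{\rho=0\}$ and there is a continuous function $c:\partial\Delta\to\mathbb R\setminus\{0\}$ such that $\zeta\mapsto\zeta c(\zeta)\partial\rho(f(\zeta))$ extends holomorphically to $\Delta$ (continuously up to $\partial\Delta$).
   Context: $\Delta$ denotes the unit disc in $\mathbb C$ and $\Delta_r$ the disc of radius $r$ centered at $0$. Fix $0<\varepsilon<\frac{1}{100}$. Let $\rho(z,w)=|z|^2+|w|^2-\operatorname{Re}(\bar z^4w^2)-1$ on $\mathbb C^2$, $\partial\rho=(\partial\rho/\partial z,\partial\rho/\partial w)$, and $\Omega=\{\rho<0\}\cap\big(\Delta_{1+\varepsilon}\times\Delta_{\frac{1}{4(1+\varepsilon)^3}}\big)$. *)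

(* Defs.v *)
From Stdlib Require Import Reals Lra.
Open Scope R_scope.

Record Cx := mkC { Re : R ; Im : R }.

Definition Cof (x : R) : Cx := mkC x 0.
Definition C0 : Cx := Cof 0.
Definition C1 : Cx := Cof 1.
Definition Cadd (u v : Cx) : Cx := mkC (Re u + Re v) (Im u + Im v).
Definition Copp (u : Cx) : Cx := mkC (- Re u) (- Im u).
Definition Csub (u v : Cx) : Cx := Cadd u (Copp v).
Definition Cmul (u v : Cx) : Cx :=
  mkC (Re u * Re v - Im u * Im v) (Re u * Im v + Im u * Re v).
Definition Cconj (u : Cx) : Cx := mkC (Re u) (- Im u).
Definition Cnorm (u : Cx) : R := sqrt (Re u * Re u + Im u * Im u).
Definition Cexpi (t : R) : Cx := mkC (cos t) (sin t).

Definition C2 := (Cx * Cx)%type.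

Definition rho (p : C2) : R :=
  let z := fst p in let w := snd p in
  let zb := Cconj z in
  Cnorm z ^ 2 + Cnorm w ^ 2
  - Re (Cmul (Cmul (Cmul zb zb) (Cmul zb zb)) (Cmul w w)) - 1.

(** Wirtinger derivative of a real function g : C2 -> R at p.
    dz g p = 1/2 (dg/dx1 - i dg/dy1), dw g p = 1/2 (dg/dx2 - i dg/dy2),
    where z = x1 + i y1, w = x2 + i y2.  [is_partial_vec g p v] says that the
    four real partial derivatives of g at p exist and that
    v = (dg/dz (p), dg/dw (p)). *)
Definition is_partial_vec (g : C2 -> R) (p : C2) (v : C2) : Prop :=
  let z := fst p in let w := snd p in
  exists gx1 gy1 gx2 gy2 : R,
    derivable_pt_lim (fun t => g (mkC t (Im z), w)) (Re z) gx1 /\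
    derivable_pt_lim (fun t => g (mkC (Re z) t, w)) (Im z) gy1 /\
    derivable_pt_lim (fun t => g (z, mkC t (Im w))) (Re w) gx2 /\
    derivable_pt_lim (fun t => g (z, mkC (Re w) t)) (Im w) gy2 /\
    fst v = mkC (gx1 / 2) (- gy1 / 2) /\
    snd v = mkC (gx2 / 2) (- gy2 / 2).

Definition C_differentiable_at (F : Cx -> Cx) (p : Cx) : Prop :=
  exists L : Cx, forall eps : R, 0 < eps -> exists delta : R, 0 < delta /\
    forall h : Cx, Cnorm h < delta ->
      Cnorm (Csub (Csub (F (Cadd p h)) (F p)) (Cmul L h)) <= eps * Cnorm h.

Definition holomorphic_on_disc (F : Cx -> C2) : Prop :=
  forall p : Cx, Cnorm p < 1 ->
    C_differentiable_at (fun q => fst (F q)) p /\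
    C_differentiable_at (fun q => snd (F q)) p.

Definition continuous_on_closed_disc (F : Cx -> C2) : Prop :=
  forall p : Cx, Cnorm p <= 1 ->
    forall eps : R, 0 < eps -> exists delta : R, 0 < delta /\
      forall q : Cx, Cnorm q <= 1 -> Cnorm (Csub q p) < delta ->
        Cnorm (Csub (fst (F q)) (fst (F p))) < eps /\
        Cnorm (Csub (snd (F q)) (snd (F p))) < eps.

Definition continuous_on_circle (c : Cx -> R) : Prop :=
  forall p : Cx, Cnorm p = 1 ->
    forall eps : R, 0 < eps -> exists delta : R, 0 < delta /\
      forall q : Cx, Cnorm q = 1 -> Cnorm (Csub q p) < delta ->
        Rabs (c q - c p) < eps.

Definition fdisc (a1 : Cx) (a2 th : R) (zeta : Cx) : C2 :=
  (Cmul (Cexpi th) zeta,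
   Cmul (Cmul (Cexpi (2 * th)) zeta)
        (Cadd (Cadd a1 (Cmul (Cof a2) zeta))
              (Cmul (Cconj a1) (Cmul zeta zeta)))).

Definition C2scale (s : Cx) (v : C2) : C2 := (Cmul s (fst v), Cmul s (snd v)).

Definition stationary_disc (g : C2 -> R) (f : Cx -> C2) : Prop :=
  (forall zeta : Cx, Cnorm zeta = 1 -> g (f zeta) = 0) /\
  exists c : Cx -> R,
    continuous_on_circle c /\
    (forall zeta : Cx, Cnorm zeta = 1 -> c zeta <> 0) /\
    exists F : Cx -> C2,
      holomorphic_on_disc F /\ continuous_on_closed_disc F /\
      forall zeta : Cx, Cnorm zeta = 1 ->
        exists v : C2, is_partial_vec g (f zeta) v /\
          F zeta = C2scale (Cmul zeta (Cof (c zeta))) v.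

(* Main.v *)
Require Import Defs.
From Stdlib Require Import Reals Lra.
From Coquelicot Require Import Rcomplements Rbar Hierarchy Derive AutoDerive.
Open Scope R_scope.

Definition Prho (a b c d : R) : R :=
  a*a+b*b+(c*c+d*d) - Re (Cmul (Cmul (Cmul (mkC a (-b)) (mkC a (-b))) (Cmul (mkC a (-b)) (mkC a (-b)))) (Cmul (mkC c d) (mkC c d))) - 1.

Lemma rho_eq a b c d : rho (mkC a b, mkC c d) = Prho a b c d.
Proof.
  unfold rho, Prho, Cnorm; cbn [fst snd Re Im Cconj].
  rewrite !pow2_sqrt; [reflexivity | nra | nra].
Qed.

Section D.
Variables (x1 y1 x2 y2 r : R).
Hypothesis HN : x1^2 + y1^2 = 1.
Hypothesis H2 : x2 = r*(x1^2-y1^2).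
Hypothesis H3 : y2 = r*(2*x1*y1).

Lemma d1 : derivable_pt_lim (fun t => rho (mkC t y1, mkC x2 y2)) x1 (2*x1*(1-2*r^2)).
Proof.
  apply is_derive_Reals.
  apply is_derive_ext with (f := fun t => Prho t y1 x2 y2).
  { intro t; now rewrite rho_eq. }
  unfold Prho; cbn [Re Im Cmul]. auto_derive; [exact I|].
  subst x2 y2.
  transitivity (2*x1*(1-2*r^2*(x1^2+y1^2)^3)); [ring| rewrite HN; ring].
Qed.
Lemma d2 : derivable_pt_lim (fun t => rho (mkC x1 t, mkC x2 y2)) y1 (2*y1*(1-2*r^2)).
Proof.
  apply is_derive_Reals.
  apply is_derive_ext with (f := fun t => Prho x1 t x2 y2).
  { intro t; now rewrite rho_eq. }
  unfold Prho; cbn [Re Im Cmul]. auto_derive; [exact I|].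
  subst x2 y2.
  transitivity (2*y1*(1-2*r^2*(x1^2+y1^2)^3)); [ring| rewrite HN; ring].
Qed.
Lemma d3 : derivable_pt_lim (fun t => rho (mkC x1 y1, mkC t y2)) x2 0.
Proof.
  apply is_derive_Reals.
  apply is_derive_ext with (f := fun t => Prho x1 y1 t y2).
  { intro t; now rewrite rho_eq. }
  unfold Prho; cbn [Re Im Cmul]. auto_derive; [exact I|].
  subst x2 y2.
  transitivity (2*r*(x1^2-y1^2)*(1-(x1^2+y1^2)^2)); [ring| rewrite HN; ring].
Qed.
Lemma d4 : derivable_pt_lim (fun t => rho (mkC x1 y1, mkC x2 t)) y2 0.
Proof.
  apply is_derive_Reals.
  apply is_derive_ext with (f := fun t => Prho x1 y1 x2 t).
  { intro t; now rewrite rho_eq. }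
  unfold Prho; cbn [Re Im Cmul]. auto_derive; [exact I|].
  subst x2 y2.
  transitivity (4*r*x1*y1*(1-(x1^2+y1^2)^2)); [ring| rewrite HN; ring].
Qed.
End D.

Lemma abs_le_norm (x y : R) : Rabs x <= sqrt (x*x + y*y).
Proof.
  rewrite <- sqrt_Rsqr_abs. apply sqrt_le_1_alt. unfold Rsqr. nra.
Qed.

Lemma abs_le_norm2 (x y : R) : Rabs y <= sqrt (x*x + y*y).
Proof.
  rewrite <- sqrt_Rsqr_abs. apply sqrt_le_1_alt. unfold Rsqr. nra.
Qed.

Lemma Cnorm_zero (u : Cx) : Re u = 0 -> Im u = 0 -> Cnorm u = 0.
Proof.
  intros H1 H2; unfold Cnorm; rewrite H1, H2. replace (0*0+0*0) with 0 by ring. apply sqrt_0.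
Qed.

Lemma Cnorm_pos (u : Cx) : 0 <= Cnorm u.
Proof. apply sqrt_pos. Qed.

Lemma circle_eq (p q : R) : Cnorm (mkC p q) = 1 -> p^2 + q^2 = 1.
Proof.
  unfold Cnorm; cbn [Re Im]. intro H.
  replace (p^2+q^2) with (sqrt (p*p+q*q) ^ 2) by (rewrite pow2_sqrt by nra; ring). rewrite H. ring.
Qed.

Definition rr (a1 : Cx) (a2 : R) (z : Cx) : R := a2 + 2*(Re a1 * Re z + Im a1 * Im z).

Lemma fdisc_eq a1 a2 th p q : p^2+q^2 = 1 ->
  fdisc a1 a2 th (mkC p q) =
  (mkC (cos th * p - sin th * q) (cos th * q + sin th * p),
   mkC (rr a1 a2 (mkC p q) * ((cos th * p - sin th * q)^2 - (cos th * q + sin th * p)^2))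
       (rr a1 a2 (mkC p q) * (2*(cos th * p - sin th * q)*(cos th * q + sin th * p)))).
Proof.
  intro HN. unfold fdisc, Cexpi, rr. rewrite cos_2a, sin_2a.
  destruct a1 as [al be]. cbn [Re Im Cmul Cadd Cconj Cof].
  f_equal.
  set (c := cos th); set (s := sin th).
  unfold Cmul, Cadd, Cconj, Cof; cbn [Re Im].
  set (Ur := (c*c - s*s)*p - 2*s*c*q); set (Ui := (c*c-s*s)*q + 2*s*c*p).
  f_equal.
  - transitivity ((a2 + 2 * (al * p + be * q)) * ((c * p - s * q) ^ 2 - (c * q + s * p) ^ 2)
       + (Ur*al - Ui*be)*(1 - (p^2+q^2))); [unfold Ur, Ui; ring | rewrite HN; ring].
  - transitivity ((a2 + 2 * (al * p + be * q)) * (2 * (c * p - s * q) * (c * q + s * p))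
       + (Ur*be + Ui*al)*(1 - (p^2+q^2))); [unfold Ur, Ui; ring | rewrite HN; ring].
Qed.

Lemma cont_c (a1 : Cx) (a2 : R) :
  (forall z, Cnorm z = 1 -> Rabs (rr a1 a2 z) <= 1/4) ->
  continuous_on_circle (fun z => 1 / (1 - 2 * (rr a1 a2 z)^2)).
Proof.
  intros Hb p Hp e He.
  set (S := Rabs (Re a1) + Rabs (Im a1)).
  assert (HS : 0 <= S) by (unfold S; pose proof (Rabs_pos (Re a1)); pose proof (Rabs_pos (Im a1)); lra).
  set (K := 4*S+1).
  exists (e / K). split. { unfold K; apply Rdiv_lt_0_compat; lra. }
  intros q Hq Hd. cbv beta.
  set (d := Cnorm (Csub q p)) in *.
  assert (Hdx : Rabs (Re q - Re p) <= d).
  { unfold d, Cnorm, Csub, Cadd, Copp; cbn [Re Im].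
    replace (Re q - Re p) with (Re q + - Re p) by ring. apply abs_le_norm. }
  assert (Hdy : Rabs (Im q - Im p) <= d).
  { unfold d, Cnorm, Csub, Cadd, Copp; cbn [Re Im].
    replace (Im q - Im p) with (Im q + - Im p) by ring.
    apply abs_le_norm2. }
  pose proof (Hb p Hp) as Hrp. pose proof (Hb q Hq) as Hrq.
  set (rp := rr a1 a2 p) in *. set (rq := rr a1 a2 q) in *.
  assert (HX : Rabs (rq - rp) <= 2 * S * d).
  { replace (rq - rp) with (2 * (Re a1 * (Re q - Re p) + Im a1 * (Im q - Im p)))
      by (unfold rq, rp, rr; ring).
    rewrite Rabs_mult, (Rabs_pos_eq 2) by lra.
    pose proof (Rabs_triang (Re a1 * (Re q - Re p)) (Im a1 * (Im q - Im p))).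
    rewrite !Rabs_mult in H.
    pose proof (Rmult_le_compat_l (Rabs (Re a1)) _ _ (Rabs_pos _) Hdx).
    pose proof (Rmult_le_compat_l (Rabs (Im a1)) _ _ (Rabs_pos _) Hdy).
    unfold S. nra. }
  assert (HY : Rabs (rq + rp) <= 1/2).
  { pose proof (Rabs_triang rq rp). lra. }
  assert (Hq2 : rq^2 <= 1/16).
  { pose proof (Rabs_pos rq). rewrite <- (pow2_abs rq). nra. }
  assert (Hp2 : rp^2 <= 1/16).
  { pose proof (Rabs_pos rp). rewrite <- (pow2_abs rp). nra. }
  set (kq := 1 - 2*rq^2). set (kp := 1 - 2*rp^2).
  assert (Hkk : 49/64 <= kq*kp) by (unfold kq, kp; nra).
  replace (1/kq - 1/kp) with ((2*(rq-rp)*(rq+rp)) * / (kq*kp))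
    by (unfold kq, kp; field; split; nra).
  rewrite Rabs_mult, Rabs_inv, (Rabs_pos_eq (kq*kp)) by lra.
  rewrite !Rabs_mult, (Rabs_pos_eq 2) by lra.
  pose proof (Rinv_le_contravar (49/64) (kq*kp) ltac:(lra) Hkk) as HI.
  assert (HI' : / (kq*kp) <= 64/49).
  { replace (64/49) with (/ (49/64)) by field. exact HI. }
  assert (HIp : 0 < / (kq*kp)) by (apply Rinv_0_lt_compat; lra).
  pose proof (Rabs_pos (rq - rp)). pose proof (Rabs_pos (rq+rp)).
  assert (HdK : d * K < e).
  { apply (Rmult_lt_compat_r K) in Hd; [|unfold K; lra].
    replace (e / K * K) with e in Hd by (field; unfold K; lra). exact Hd. }
  assert (Hd0 : 0 <= d) by apply Cnorm_pos.
  assert (A1 : 2 * Rabs (rq - rp) * Rabs (rq + rp) <= 2 * S * d).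
  { nra. }
  assert (A2 : 2 * Rabs (rq - rp) * Rabs (rq + rp) * / (kq*kp) <= 2 * S * d * (64/49)).
  { apply Rmult_le_compat; try lra. nra. }
  unfold K in HdK. nra.
Qed.

Lemma rr_bound (a1 : Cx) (a2 : R) z : Cnorm z = 1 ->
  Rabs (rr a1 a2 z) <= 2 * Cnorm a1 + Rabs a2.
Proof.
  destruct z as [p q]. intro Hz. apply circle_eq in Hz.
  unfold rr; cbn [Re Im].
  assert (H : Rabs (Re a1 * p + Im a1 * q) <= Cnorm a1).
  { unfold Cnorm. rewrite <- sqrt_Rsqr_abs. apply sqrt_le_1_alt. unfold Rsqr.
    assert (E : (Re a1 * p + Im a1 * q)^2 + (Re a1 * q - Im a1 * p)^2
              = (Re a1 * Re a1 + Im a1 * Im a1) * (p^2+q^2)) by ring.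
    rewrite Hz in E. pose proof (pow2_ge_0 (Re a1 * q - Im a1 * p)). nra. }
  pose proof (Rabs_triang a2 (2 * (Re a1 * p + Im a1 * q))).
  rewrite Rabs_mult, (Rabs_pos_eq 2) in H0 by lra. lra.
Qed.

Theorem mainTheorem10 (eps : R) (a1 : Cx) (a2 th : R) :
  0 < eps -> eps < 1 / 100 ->
  0 <= th < 2 * PI ->
  2 * Cnorm a1 + Rabs a2 < 1 / (4 * (1 + eps) ^ 3) ->
  stationary_disc rho (fdisc a1 a2 th).
Proof.
  intros He He' Hth Hb.
  assert (Hq : 1 / (4 * (1 + eps) ^ 3) <= 1/4).
  { assert (X1 : 1 <= (1+eps)^3) by nra.
    assert (E : 1 / (4 * (1 + eps) ^ 3) * (4 * (1 + eps) ^ 3) = 1) by (field; nra).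
    assert (P : 0 < 1 / (4 * (1 + eps) ^ 3)) by (apply Rdiv_lt_0_compat; nra).
    set (y := 1 / (4 * (1 + eps) ^ 3)) in *. set (X := (1+eps)^3) in *.
    pose proof (Rmult_le_compat_l y 1 X ltac:(lra) X1). nra. }
  assert (Hr : forall z, Cnorm z = 1 -> Rabs (rr a1 a2 z) <= 1/4).
  { intros z Hz. pose proof (rr_bound a1 a2 z Hz). lra. }
  assert (Hcs : cos th ^ 2 + sin th ^ 2 = 1).
  { pose proof (sin2_cos2 th) as H. unfold Rsqr in H. nra. }
  split.
  { intros [p q] Hz. pose proof (circle_eq p q Hz) as HN.
    rewrite fdisc_eq by exact HN. rewrite rho_eq. unfold Prho; cbn [Re Im Cmul].
    set (c := cos th) in *; set (s := sin th) in *.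
    set (r := rr a1 a2 (mkC p q)).
    set (x1 := c*p - s*q); set (y1 := c*q + s*p).
    assert (HN1 : x1^2 + y1^2 = 1).
    { transitivity ((c^2+s^2)*(p^2+q^2)); [unfold x1, y1; ring | rewrite Hcs, HN; ring]. }
    set (N := x1^2+y1^2) in HN1.
    transitivity (N + r^2*N^2 - r^2*N^4 - 1); [unfold N; ring | rewrite HN1; ring]. }
  exists (fun z => 1 / (1 - 2 * (rr a1 a2 z)^2)).
  split; [apply cont_c; exact Hr|].
  split.
  { intros z Hz. pose proof (Hr z Hz) as H.
    assert (H2 : (rr a1 a2 z)^2 <= 1/16).
    { pose proof (Rabs_pos (rr a1 a2 z)). rewrite <- (pow2_abs (rr a1 a2 z)). nra. }
    assert (0 < 1 - 2 * (rr a1 a2 z)^2) by lra.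
    apply Rgt_not_eq. apply Rdiv_lt_0_compat; lra. }
  exists (fun _ => (mkC (cos th) (- sin th), C0)).
  split.
  { intros p _. split; exists C0; intros e0 He0; exists 1; split; try lra; intros h _;
    rewrite Cnorm_zero by (cbn; ring); pose proof (Cnorm_pos h); nra. }
  split.
  { intros p _ e0 He0. exists 1. split; [lra|]. intros q _ _.
    rewrite !Cnorm_zero by (cbn; ring). lra. }
  intros [p q] Hz. pose proof (circle_eq p q Hz) as HN.
  pose proof (Hr _ Hz) as Hrz.
  rewrite fdisc_eq by exact HN.
  set (c := cos th) in *; set (s := sin th) in *.
  set (r := rr a1 a2 (mkC p q)) in *.
  set (x1 := c*p - s*q); set (y1 := c*q + s*p).
  assert (HN1 : x1^2 + y1^2 = 1).
  { transitivity ((c^2+s^2)*(p^2+q^2)); [unfold x1, y1; ring | rewrite Hcs, HN; ring]. }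
  assert (H2 : r^2 <= 1/16).
  { pose proof (Rabs_pos r). rewrite <- (pow2_abs r). nra. }
  set (k := 1 - 2*r^2).
  assert (Hk : 0 < k) by (unfold k; lra).
  exists (mkC (x1*k) (- (y1*k)), mkC 0 0).
  split.
  { exists (2*x1*(1-2*r^2)), (2*y1*(1-2*r^2)), 0, 0.
    cbn [fst snd Re Im].
    split; [apply d1 with (r := r); auto|].
    split; [apply d2 with (r := r); auto|].
    split; [apply d3 with (r := r); auto|].
    split; [apply d4 with (r := r); auto|].
    split; f_equal; unfold k; field. }
  unfold C2scale, Cmul, Cof, C0; cbn [fst snd Re Im].
  f_equal; f_equal.
  - transitivity (c * (p^2+q^2)); [rewrite HN; ring|]. unfold x1, y1; field; lra.
  - transitivity (- s * (p^2+q^2)); [rewrite HN; ring|]. unfold x1, y1; field; lra.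
  - unfold Cof; f_equal; ring.
Qed.
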